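(* Every finite graph is isomorphic to an induced subgraph of the enhanced power graph of some finite group, and this group can be taken to be abelian.
   Context: The enhanced power graph of a group $G$ has vertex set $G$, distinct $x,y$ adjacent iff $\langle x,y\rangle$ is cyclic. *)

(* Defs.v *)
From mathcomp Require Import all_boot all_fingroup all_solvable.
Set Implicit Arguments. Unset Strict Implicit. Unset Printing Implicit Defensive.
Import GroupScope.

Definition simple_graph (V : finType) (adj : rel V) : Prop :=
  symmetric adj /\ irreflexive adj.

Definition epg_adj (gT : finGroupType) : rel gT :=
  fun x y => (x != y) && cyclic <<[set x; y]>>.

Definition induced_subgraph_embedding (V W : finType) (adj : rel V)
    (adjW : rel W) (f : V -> W) : Prop :=
  injective f /\ forall x y : V, adj x y = adjW (f x) (f y).

(* Main.v *)
Require Import Defs.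
From mathcomp Require Import all_boot all_fingroup all_solvable.
From mathcomp Require Import zmodp gproduct.
Set Implicit Arguments. Unset Strict Implicit. Unset Printing Implicit Defensive.
Set Warnings "-notation-overridden,-deprecated".
Fixpoint pr (k : nat) : nat :=
  if k is k'.+1 then s2val (prime_above (pr k')) else 2.

Lemma pr_prime k : prime (pr k).
Proof. case: k => [//|k] /=. by case: prime_above. Qed.

Lemma pr_lt k l : k < l -> pr k < pr l.
Proof.
have S m : pr m < pr m.+1 by rewrite /=; case: prime_above.
elim: l => [//|l IH]. rewrite ltnS leq_eqVlt => /orP[/eqP ->|/IH h] //.
exact: ltn_trans h (S l).
Qed.

Lemma pr_inj : injective pr.
Proof.
move=> k l e; case: (ltngtP k l) => // /pr_lt; by rewrite e ltnn.
Qed.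

Definition pp (V : finType) (i : V * V) := pr (enum_rank i).
Definition NN (V : finType) := \prod_(i : V * V) pp i.

Lemma pp_prime (V : finType) (i : V * V) : prime (pp i).
Proof. exact: pr_prime. Qed.

Lemma pp_eq (V : finType) (i j : V * V) : (pp i == pp j) = (i == j).
Proof.
apply/eqP/eqP => [e|-> //]; apply: enum_rank_inj; apply: val_inj; exact: pr_inj e.
Qed.

Lemma NN_gt0 (V : finType) : 0 < NN V.
Proof. rewrite /NN prodn_gt0 // => i; exact: prime_gt0 (pp_prime i). Qed.

Lemma pp_dvd_prod (V : finType) (i : V * V) (P : pred (V * V)) :
  (pp i %| \prod_(j | P j) pp j) = P i.
Proof.
case Pi: (P i); first by rewrite (bigD1 i) //= dvdn_mulr.
rewrite Euclid_dvd_prod ?pp_prime //.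
apply/negbTE; elim/big_ind: _ => //.
  by move=> x y hx hy; rewrite negb_or hx hy.
move=> j Pj; rewrite dvdn_prime2 ?pp_prime // pp_eq.
apply/eqP => e. subst j. by rewrite Pj in Pi.
Qed.

Lemma pp_dvd_NN (V : finType) (i : V * V) : pp i %| NN V.
Proof. by rewrite /NN pp_dvd_prod. Qed.

Lemma dvd_prod_sub (V : finType) (P Q : pred (V * V)) : (forall i, P i || Q i) ->
  NN V %| (\prod_(i | P i) pp i) * (\prod_(i | Q i) pp i).
Proof.
move=> h; rewrite /NN (big_mkcond P) (big_mkcond Q) /= -big_split /=.
apply: (big_ind2 (fun a b => a %| b)) => //.
  by move=> a b c d; apply: dvdn_mul.
move=> i _; case/orP: (h i) => -> /=; first exact: dvdn_mulr.
by case: (P i); [apply: dvdn_mulr| apply: dvdn_mull].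
Qed.

Lemma coprime_prod_disj (V : finType) (P Q : pred (V * V)) : (forall i, P i -> Q i -> False) ->
  coprime (\prod_(i | P i) pp i) (\prod_(i | Q i) pp i).
Proof.
move=> h; elim/big_ind: _ => [|x y hx hy|i Pi]; first exact: coprime1n.
  by rewrite coprimeMl hx hy.
elim/big_ind: _ => [|x y hx hy|j Qj]; first exact: coprimen1.
  by rewrite coprimeMr hx hy.
rewrite prime_coprime ?pp_prime // dvdn_prime2 ?pp_prime // pp_eq.
by apply/negP => /eqP e; apply: (h i) => //; rewrite e.
Qed.

Definition fst_at (V : finType) (adj : rel V) (u : V) (i : V * V) :=
  (i.1 == u) && ~~ adj i.1 i.2.
Definition snd_at (V : finType) (adj : rel V) (u : V) (i : V * V) :=
  [&& i.2 == u, i.1 != i.2 & ~~ adj i.1 i.2].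
Definition Au (V : finType) (adj : rel V) u := \prod_(i | ~~ fst_at adj u i) pp i.
Definition Bu (V : finType) (adj : rel V) u := \prod_(i | ~~ snd_at adj u i) pp i.
Definition mu (V : finType) (adj : rel V) u :=
  \prod_(i | fst_at adj u i || snd_at adj u i) pp i.

Lemma Zval (V : finType) (a : nat) : val (inZp a : 'I_(NN V).-1.+1) = a %% NN V.
Proof. by rewrite /= prednK // NN_gt0. Qed.


Import GroupScope.
Lemma pair_mul (g1 g2 : finGroupType) (x y : g1 * g2) : x * y = (x.1 * y.1, x.2 * y.2).
Proof. by []. Qed.
Lemma pair_exp (g1 g2 : finGroupType) (x : g1 * g2) n : x ^+ n = (x.1 ^+ n, x.2 ^+ n).
Proof. elim: n => [|n IH] //. rewrite !expgS IH. by []. Qed.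
Lemma pair_ab (n : nat) : abelian [set: 'I_n.+1 * 'I_n.+1].
Proof. apply/centsP=> x _ y _. rewrite /commute !pair_mul.
 by rewrite (Zp_mulgC x.1) (Zp_mulgC x.2). Qed.


Lemma Zexp (V : finType) (a n : nat) :
  val ((inZp a : 'I_(NN V).-1.+1) ^+ n) = (a * n) %% NN V.
Proof. by rewrite Zp_expg !Zval modnMml. Qed.

Definition fv (V : finType) (adj : rel V) (u : V) : ('I_(NN V).-1.+1 * 'I_(NN V).-1.+1)%type :=
  (inZp (Au adj u), inZp (Bu adj u)).

Lemma Zeq1 (n : nat) (z : 'I_n.+1) : (z == 1) = (val z == 0).
Proof. by []. Qed.

Lemma fexp1 (V : finType) (adj : rel V) u n :
  (fv adj u ^+ n == 1) = (NN V %| Au adj u * n) && (NN V %| Bu adj u * n).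
Proof.
by rewrite pair_exp /= -pair_eqE /= !Zeq1 !Zexp.
Qed.

Lemma order_fv (V : finType) (adj : rel V) u : #[fv adj u] %| mu adj u.
Proof.
rewrite order_dvdn fexp1 /Au /Bu /mu; apply/andP; split; apply: dvd_prod_sub => i.
  by case: (fst_at adj u i).
by case: (snd_at adj u i); rewrite ?orbT.
Qed.

Lemma fv_commute (V : finType) (adj : rel V) u v : commute (fv adj u) (fv adj v).
Proof.
by rewrite /commute !pair_mul (Zp_mulgC (fv adj u).1) (Zp_mulgC (fv adj u).2).
Qed.

Lemma adj_cyclic (V : finType) (adj : rel V) : symmetric adj -> irreflexive adj ->
  forall u v, adj u v -> cyclic <<[set fv adj u; fv adj v]>>.
Proof.
move=> Hs Hi u v uv.
have co : coprime (mu adj u) (mu adj v).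
  apply: coprime_prod_disj => i.
  case: i => a b; rewrite /fst_at /snd_at /=.
  case/orP => [/andP[/eqP au na]|/and3P[/eqP bu nab na]];
  case/orP => [/andP[/eqP av _]|/and3P[/eqP bv _ _]]; subst.
  - by rewrite Hi in uv.
  - by rewrite uv in na.
  - by rewrite Hs uv in na.
  - by rewrite Hi in uv.
have co' : coprime #[fv adj u] #[fv adj v].
  apply: coprime_dvdl (order_fv adj u) _.
  exact: coprime_dvdr (order_fv adj v) co.
apply: (@cyclicS _ <[fv adj u * fv adj v]>); last exact: cycle_cyclic.
have E := cycleM (fv_commute adj u v) co'.
rewrite gen_subG; apply/subsetP => z; rewrite !inE.
case/orP => /eqP ->.
  have h : fv adj u \in <[fv adj u]> * <[fv adj v]>.
    by rewrite -{1}[fv adj u]mulg1 mem_mulg ?cycle_id ?group1.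
  by rewrite -E in h.
have h : fv adj v \in <[fv adj u]> * <[fv adj v]>.
  by rewrite -{1}[fv adj v]mul1g mem_mulg ?cycle_id ?group1.
by rewrite -E in h.
Qed.

Lemma nonadj_not_cyclic (V : finType) (adj : rel V) u v :
  u != v -> ~~ adj u v -> ~~ cyclic <<[set fv adj u; fv adj v]>>.
Proof.
move=> nuv nadj.
pose i := (u, v); pose p := pp i; pose k := NN V %/ p.
have pN : p %| NN V := pp_dvd_NN i.
have NE : NN V = (p * k)%N by rewrite mulnC divnK.
have k0 : 0 < k by move: (NN_gt0 V); rewrite NE muln_gt0 => /andP[].
have fu : fst_at adj u i by rewrite /fst_at /= eqxx nadj.
have nsu : ~~ snd_at adj u i by rewrite /snd_at /= eq_sym (negbTE nuv).
have nfv : ~~ fst_at adj v i by rewrite /fst_at /= (negbTE nuv).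
have sv : snd_at adj v i by rewrite /snd_at /= eqxx nuv nadj.
have pAu : ~~ (p %| Au adj u) by rewrite /Au pp_dvd_prod fu.
have pBu : p %| Bu adj u by rewrite /Bu pp_dvd_prod.
have pAv : p %| Au adj v by rewrite /Au pp_dvd_prod.
have pBv : ~~ (p %| Bu adj v) by rewrite /Bu pp_dvd_prod sv.
have key a : (NN V %| (a * k)%N) = (p %| a) by rewrite NE dvdn_pmul2r.
have ordp z : fv adj z ^+ k != 1 -> #[fv adj z ^+ k] = p.
  move=> ne; apply/(prime_nt_dvdP (pp_prime i)); first by rewrite order_eq1.
  by rewrite order_dvdn -expgM (mulnC k p : (k * p = p * k)%N) -NE fexp1 !dvdn_mull.
have nu : fv adj u ^+ k != 1 by rewrite fexp1 !key (negbTE pAu).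
have nv : fv adj v ^+ k != 1 by rewrite fexp1 !key (negbTE pBv) andbF.
apply/negP => cyc.
have sub w : w \in [set fv adj u; fv adj v] -> <[w ^+ k]> \subset <<[set fv adj u; fv adj v]>>.
  by move=> hw; rewrite cycle_subG groupX // mem_gen.
have E : <[fv adj u ^+ k]> = <[fv adj v ^+ k]>.
  apply/eqP; rewrite (eq_subG_cyclic cyc) ?sub ?set21 ?set22 //.
  by rewrite -/(order (fv adj u ^+ k)) -/(order (fv adj v ^+ k)) !ordp.
have : fv adj u ^+ k \in <[fv adj v ^+ k]> by rewrite -E cycle_id.
case/cycleP => n e.
have := congr1 (fun w => val w.1) e.
rewrite /= !pair_exp /= -expgM !Zexp => h.
have h2 : NN V %| (Au adj v * (k * n))%N by rewrite mulnA dvdn_mulr // key.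
by move: h2; rewrite /dvdn -h -/(dvdn _ _) key (negbTE pAu).
Qed.

Lemma fv_inj (V : finType) (adj : rel V) : irreflexive adj -> injective (fv adj).
Proof.
move=> Hi u v e; case: (eqVneq u v) => // nuv; exfalso.
pose i := (u, u); pose p := pp i.
have fu : fst_at adj u i by rewrite /fst_at /= eqxx Hi.
have nfv : ~~ fst_at adj v i by rewrite /fst_at /= (negbTE nuv).
have pAu : ~~ (p %| Au adj u) by rewrite /Au pp_dvd_prod fu.
have pAv : p %| Au adj v by rewrite /Au pp_dvd_prod.
have := congr1 (fun w => val w.1) e; rewrite /= => h0; have h : Au adj u %% NN V = Au adj v %% NN V by rewrite -!Zval.
have := congr1 (modn^~ p) h; rewrite /= !modn_dvdm ?pp_dvd_NN // => h'.
by move: pAv pAu; rewrite /dvdn h' => ->.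
Qed.

Theorem mainTheorem10 (V : finType) (adj : rel V) :
  simple_graph adj ->
  exists (gT : finGroupType) (f : V -> gT),
    abelian [set: gT] /\ induced_subgraph_embedding adj (@epg_adj gT) f.
Proof.
move=> [Hs Hi].
exists _, (fv adj).
split; first exact: pair_ab.
split; first exact: fv_inj.
move=> x y; rewrite /epg_adj.
case: (eqVneq x y) => [<-|nxy]; first by rewrite Hi eqxx.
rewrite (inj_eq (fv_inj Hi)) nxy /=.
case a: (adj x y); first by rewrite adj_cyclic.
by apply/esym/negbTE; rewrite nonadj_not_cyclic // a.
Qed.
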